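(* Assume the standing assumptions (A1) and (A2) below. Let $t\in(1,2)$, $\delta\ge0$, $\varrho>0$, $x^+\in D$ with $\|x^+\|_{k_t}\le\varrho$, and $g^{\mathrm{obs}}\in\mathbb{Y}$ with $\|g^{\mathrm{obs}}-F(x^+)\|_{\mathbb{Y}}\le\delta$. Then there are constants $C_t,C_a,C_r$ depending only on $t$ and $L$ such that for all $\alpha>0$ and every $\hat{x}_\alpha\in\operatorname{argmin}_{x\in D}\left[\frac12\|g^{\mathrm{obs}}-F(x)\|_{\mathbb{Y}}^2+\alpha\|x\|_{\overline{r},1}\right]$: \[\tfrac12\|g^{\mathrm{obs}}-F(\hat{x}_\alpha)\|_{\mathbb{Y}}^2+\alpha\|\hat{x}_\alpha\|_{\overline{r},1}\le\delta^2+C_t\varrho^t\alpha^{2-t},\] \[\|T_\alpha(x^+)-\hat{x}_\alpha\|_{\overline{a},2}^2\le8L^2\delta^2+C_a\varrho^t\alpha^{2-t},\qquad \|T_\alpha(x^+)-\hat{x}_\alpha\|_{\overline{r},1}\le\delta^2\alpha^{-1}+C_r\varrho^t\alpha^{1-t}.\]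
   Context: $\Lambda$ is a countable index set. For a sequence $\omega$ of positive reals and $p\in(0,\infty)$, $\|x\|_{\omega,p}=\left(\sum_{j\in\Lambda}\omega_j^p|x_j|^p\right)^{1/p}$ (possibly $+\infty$) and $\ell^p_\omega=\{x\in\mathbb{R}^\Lambda:\|x\|_{\omega,p}<\infty\}$. For $t\in(0,2)$, $k_t=\{x:\|x\|_{k_t}<\infty\}$ with $\|x\|_{k_t}=\sup_{\alpha>0}\alpha\left(\sum_{j}\overline{a}_j^{-2}\overline{r}_j^2\mathbf{1}_{\{\overline{a}_j^{-2}\overline{r}_j\alpha<|x_j|\}}\right)^{1/t}$. For $\alpha>0$, $T_\alpha(x)_j=x_j$ if $\overline{a}_j^{-2}\overline{r}_j\alpha<|x_j|$ and $0$ otherwise. (A1): $\overline{a},\overline{r}$ are sequences of positive reals indexed by $\Lambda$ such that for every $\varepsilon>0$ all but finitely many $j$ satisfy $\overline{a}_j\overline{r}_j^{-1}\le\varepsilon$; $\mathbb{Y}$ is a Banach space; $D\subseteq\ell^2_{\overline{a}}$ is closed with $D\cap\ell^1_{\overline{r}}\ne\emptyset$; $F:D\to\mathbb{Y}$ and there is $L>0$ with $L^{-1}\|x^{(1)}-x^{(2)}\|_{\overline{a},2}\le\|F(x^{(1)})-F(x^{(2)})\|_{\mathbb{Y}}\le L\|x^{(1)}-x^{(2)}\|_{\overline{a},2}$ for all $x^{(1)},x^{(2)}\in D$. (A2): if $x\in D$ and $z\in\ell^2_{\overline{a}}$ with $|z_j|\le|x_j|$ for all $j$, then $z\in D$. 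*)

(* Defs.v *)
From HB Require Import structures.
From mathcomp Require Import all_boot all_order all_algebra.
From mathcomp Require Import all_classical all_reals all_analysis.
Set Implicit Arguments. Unset Strict Implicit. Unset Printing Implicit Defensive.
Import Order.TTheory GRing.Theory Num.Theory.
Import numFieldNormedType.Exports.
Local Open Scope classical_set_scope.
Local Open Scope ring_scope.

Section Defs.
Context {R : realType} {I : countType}.

Definition wnorm (w : I -> R) (p : R) (x : I -> R) : \bar R :=
  ((\esum_(j in [set: I]) ((w j * `|x j|) `^ p)%:E) `^ p^-1)%E.

Definition in_lp (w : I -> R) (p : R) (x : I -> R) : Prop :=
  (wnorm w p x < +oo)%E.

Definition knorm (a r : I -> R) (t : R) (x : I -> R) : \bar R :=
  ereal_sup [set ((al%:E * ((\esum_(j in [set j | ((a j) ^-2 * r j * al < `|x j|)%R])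
                          ((a j) ^-2 * (r j) ^+ 2)%R%:E) `^ t^-1)))%E
            | al in [set al : R | (0 < al)%R]].

Definition Thr (a r : I -> R) (al : R) (x : I -> R) : I -> R :=
  fun j => if (a j) ^-2 * r j * al < `|x j| then x j else 0.

Definition closed_l2 (a : I -> R) (D : set (I -> R)) : Prop :=
  forall (u : nat -> I -> R) (x : I -> R),
    (forall n, D (u n)) -> in_lp a 2 x ->
    (forall e : R, 0 < e -> exists N : nat, forall n, (N <= n)%N ->
        (wnorm a 2 (u n \- x)%R <= e%:E)%E) ->
    D x.

Definition assumption_A1 {Y : completeNormedModType R}
    (a r : I -> R) (D : set (I -> R)) (F : (I -> R) -> Y) (L : R) : Prop :=
  [/\ (forall j, 0 < a j) /\ (forall j, 0 < r j),
      (forall eps : R, 0 < eps -> finite_set [set j | eps < a j / r j]),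
      D `<=` in_lp a 2 /\ closed_l2 a D,
      (exists x, D x /\ in_lp r 1 x) &
      0 < L /\
      (forall x1 x2, D x1 -> D x2 ->
        ((L^-1)%:E * wnorm a 2 (x1 \- x2)%R <= (`|F x1 - F x2|)%:E)%E /\
        ((`|F x1 - F x2|)%:E <= L%:E * wnorm a 2 (x1 \- x2)%R)%E)].

Definition assumption_A2 (a : I -> R) (D : set (I -> R)) : Prop :=
  forall x z : I -> R, D x -> in_lp a 2 z -> (forall j, `|z j| <= `|x j|) -> D z.

Definition tik {Y : completeNormedModType R} (r : I -> R) (F : (I -> R) -> Y)
    (gobs : Y) (al : R) (x : I -> R) : \bar R :=
  ((2^-1 * `|gobs - F x| ^+ 2)%:E + al%:E * wnorm r 1 x)%E.

Definition is_argmin {Y : completeNormedModType R} (D : set (I -> R)) (r : I -> R)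
    (F : (I -> R) -> Y) (gobs : Y) (al : R) (xh : I -> R) : Prop :=
  D xh /\ forall x, D x -> (tik r F gobs al xh <= tik r F gobs al x)%E.

End Defs.

(* Main.v *)
Require Import Defs.
From HB Require Import structures.
From mathcomp Require Import all_boot all_order all_algebra.
From mathcomp Require Import all_classical all_reals all_analysis.
From mathcomp Require Import ring lra.
Import Order.TTheory GRing.Theory Num.Theory.
Import numFieldNormedType.Exports.
Local Open Scope classical_set_scope.
Local Open Scope ring_scope.
Section RealPart.
Context {R : realType}.

Lemma sum_sub_le {I : Type} (s : seq I) (P Q : pred I) (f : I -> R) :
  (forall j, 0 <= f j) -> (forall j, P j -> Q j) ->
  \sum_(j <- s | P j) f j <= \sum_(j <- s | Q j) f j.
Proof.
move=> f0 PQ; rewrite [X in X <= _]big_mkcond [X in _ <= X]big_mkcond.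
apply: ler_sum => j _; case: ifP => Pj; first by rewrite (PQ _ Pj).
by case: ifP.
Qed.

Lemma sum_cover {I : eqType} (s : seq I) (P : pred I) (Q : nat -> pred I)
  (M : nat) (f : I -> R) :
  (forall j, 0 <= f j) ->
  (forall j, j \in s -> P j -> f j = 0 \/ exists2 k, (k < M)%N & Q k j) ->
  \sum_(j <- s | P j) f j <= \sum_(k < M) \sum_(j <- s | Q k j) f j.
Proof.
move=> f0 cov.
rewrite (eq_bigr (fun k : 'I_M => \sum_(j <- s) (if Q k j then f j else 0))); last first.
  by move=> k _; rewrite big_mkcond.
rewrite exchange_big /= big_mkcond [X in _ <= X]big_seq_cond [X in X <= _]big_seq_cond.
apply: ler_sum => j /andP[js _].
case: ifP => Pj; last by apply: sumr_ge0 => k _; case: ifP.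
case: (cov j js Pj) => [->|[k kM Qk]].
  by apply: sumr_ge0 => k _; case: ifP.
rewrite (bigD1 (Ordinal kM)) //= Qk lerDl.
by apply: sumr_ge0 => k' _; case: ifP.
Qed.

Lemma geom_le (q : R) M : 0 <= q -> q < 1 -> \sum_(k < M) q ^+ k <= (1 - q)^-1.
Proof.
move=> q0 q1.
have e : (1 - q) * \sum_(k < M) q ^+ k = 1 - q ^+ M.
  elim: M => [|M IH]; first by rewrite big_ord0 expr0 mulr0 subrr.
  by rewrite big_ord_recr /= mulrDr IH exprS; ring.
have q1' : 0 < 1 - q by rewrite subr_gt0.
rewrite -(ler_pM2l q1') e mulfV ?gt_eqF // gerBl exprn_ge0 //.
Qed.

Lemma shell_up (al v : R) M : 0 < al -> al < v -> v <= 2 ^+ M * al ->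
  exists2 k, (k < M)%N & (2 ^+ k * al < v) && (v <= 2 ^+ k.+1 * al).
Proof.
move=> al0; elim: M => [|M IH] lv vM.
  by move: (lt_le_trans lv vM); rewrite expr0 mul1r ltxx.
case: (leP v (2 ^+ M * al)) => h.
  by case: (IH lv h) => k kM hk; exists k => //; apply: ltnW.
by exists M => //; rewrite h vM.
Qed.

Lemma shell_down (al v : R) M : 0 < al -> al * 2^-1 ^+ M < v -> v <= al ->
  exists2 k, (k < M)%N & (al * 2^-1 ^+ k.+1 < v) && (v <= al * 2^-1 ^+ k).
Proof.
move=> al0; elim: M => [|M IH] lv vM.
  by move: (lt_le_trans lv vM); rewrite expr0 mulr1 ltxx.
case: (ltP (al * 2^-1 ^+ M) v) => h.
  by case: (IH h vM) => k kM hk; exists k => //; apply: ltnW.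
by exists M => //; rewrite lv h.
Qed.

Lemma exists_pow2 (c : R) : exists M, c < 2 ^+ M.
Proof.
case: (lerP c 0) => c0; first by exists 0%N; rewrite expr0 (le_lt_trans c0).
exists (Num.Def.archi_bound c).
apply: (lt_le_trans (archi_boundP (ltW c0))).
rewrite -natrX ler_nat; apply: ltnW; exact: ltn_expl.
Qed.

Lemma exists_bound {I : eqType} (s : seq I) (P : I -> nat -> Prop) :
  (forall j m n, (m <= n)%N -> P j m -> P j n) -> (forall j, exists m, P j m) ->
  exists M, forall j, j \in s -> P j M.
Proof.
move=> mono ex; elim: s => [|j s [M HM]]; first by exists 0%N.
case: (ex j) => m Pm; exists (maxn m M) => i; rewrite inE => /orP[/eqP->|iS].
  by apply: (mono _ m) => //; rewrite leq_maxl.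
by apply: (mono _ M); [rewrite leq_maxr | apply: HM].
Qed.


Lemma weak_a {I : eqType} (s : seq I) (u w : I -> R) (rho t al : R) :
  0 < al -> 1 < t -> t < 2 -> (forall j, 0 <= u j) -> (forall j, 0 <= w j) ->
  (forall be, 0 < be -> \sum_(j <- s | be < u j) w j <= rho `^ t / be `^ t) ->
  \sum_(j <- s | u j <= al) w j * u j ^+ 2 <=
    4 * (2^-1 `^ (2 - t) / (1 - 2^-1 `^ (2 - t))) * (rho `^ t * al `^ (2 - t)).
Proof.
move=> al0 t1 t2 u0 w0 Hw.
set h : R := 2^-1; set q := h `^ (2 - t).
have h0 : 0 < h by rewrite /h invr_gt0.
have h1 : h <= 1 by rewrite /h invf_le1 // ler1n.
have q0 : 0 <= q by apply: powR_ge0.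
have q1 : q < 1.
  apply: (@lt_le_trans _ _ ((1:R) `^ (2 - t))); last by rewrite powR1.
  rewrite /q; apply: gt0_ltr_powR; rewrite ?nnegrE ?subr_gt0 //.
  - exact: ltW.
  - by rewrite /h invf_lt1 // ltr1n.
have [M HM] : exists M, forall j, j \in s -> (0 < u j -> al * h ^+ M < u j).
  apply: exists_bound.
    move=> j m n mn Pm /Pm; apply: le_lt_trans; rewrite ler_pM2l //.
    exact: ler_wiXn2l (ltW h0) h1 _ _ mn.
  move=> j; case: (ltP 0 (u j)) => uj; last first.
    by exists 0%N.
  have [M hM] := exists_pow2 (al / u j); exists M => _.
  rewrite /h exprVn ltr_pdivrMr ?exprn_gt0 //.
  by rewrite mulrC -ltr_pdivrMr.
refine (le_trans (@sum_cover _ s (fun j => u j <= al) (fun k j => (al * h ^+ k.+1 < u j) && (u j <= al * h ^+ k)) M (fun j => w j * u j ^+ 2) _ _) _).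
- move=> j; apply: mulr_ge0 => //; exact: exprn_ge0.
- move=> j js ujal; case: (ltP 0 (u j)) => uj.
    by right; apply: shell_down => //; apply: HM.
  left; have -> : u j = 0 by apply/le_anti; rewrite uj u0.
  by rewrite expr0n mulr0.
apply: (@le_trans _ _ (\sum_(k < M) (4 * rho `^ t * al `^ (2 - t) * q) * q ^+ k)).
  apply: ler_sum => k _.
  set be := al * h ^+ k.+1.
  have be0 : 0 < be by rewrite /be mulr_gt0 // exprn_gt0.
  apply: (@le_trans _ _ (\sum_(j <- s | (al * h ^+ k.+1 < u j) && (u j <= al * h ^+ k)) w j * (al * h ^+ k) ^+ 2)).
    apply: ler_sum => j /andP[_ hj]; apply: ler_wpM2l => //.
    by apply: lerXn2r; rewrite ?nnegrE // mulr_ge0 // ?exprn_ge0 // ltW.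
  rewrite -big_distrl /=.
  apply: (@le_trans _ _ ((rho `^ t / be `^ t) * (al * h ^+ k) ^+ 2)).
    apply: ler_wpM2r; first exact: sqr_ge0.
    by apply: le_trans (Hw be be0); apply: sum_sub_le => // j /andP[].
  have e1 : al * h ^+ k = 2 * be by rewrite /be exprS /h; field.
  have e2 : be `^ (2 - t) = be ^+ 2 / be `^ t.
    by rewrite powRB ?gt_eqF ?implybT // -[X in _ `^ X]/(2%:R) powR_mulrn // ltW.
  have e3 : be `^ (2 - t) = al `^ (2 - t) * (q * q ^+ k).
    rewrite /be powRM ?exprn_ge0 ?(ltW al0) ?(ltW h0) //; congr (_ * _).
    rewrite -exprS /q -!powR_mulrn ?(ltW h0) ?powR_ge0 // -!powRrM mulrC //.
  have : rho `^ t / be `^ t * (al * h ^+ k) ^+ 2 = 4 * rho `^ t * be `^ (2 - t).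
    by rewrite e2 e1; field; rewrite gt_eqF // powR_gt0.
  by move=> ->; rewrite e3 -!mulrA.
rewrite -big_distrr /=.
apply: (@le_trans _ _ ((4 * rho `^ t * al `^ (2 - t) * q) * (1 - q)^-1)).
  apply: ler_wpM2l; last exact: geom_le.
  by rewrite !mulr_ge0 // powR_ge0.
by rewrite le_eqVlt; apply/orP; left; apply/eqP; ring.
Qed.


Lemma weak_b {I : eqType} (s : seq I) (u w : I -> R) (rho t al : R) :
  0 < al -> 1 < t -> t < 2 -> (forall j, 0 <= u j) -> (forall j, 0 <= w j) ->
  (forall be, 0 < be -> \sum_(j <- s | be < u j) w j <= rho `^ t / be `^ t) ->
  \sum_(j <- s | al < u j) w j * u j <=
    2 * (1 - 2 `^ (1 - t))^-1 * (rho `^ t * al `^ (1 - t)).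
Proof.
move=> al0 t1 t2 u0 w0 Hw.
set q : R := 2 `^ (1 - t).
have q0 : 0 <= q by apply: powR_ge0.
have q1 : q < 1.
  rewrite /q -opprB powRN invf_lt1 ?powR_gt0 //.
  apply: (@le_lt_trans _ _ ((1:R) `^ (t - 1))); first by rewrite powR1.
  by apply: gt0_ltr_powR; rewrite ?nnegrE ?subr_gt0 ?ltr1n.
have [M HM] : exists M, forall j, j \in s -> u j <= 2 ^+ M * al.
  apply: exists_bound.
    move=> j m n mn Pm; apply: (le_trans Pm); rewrite ler_pM2r //.
    by rewrite ler_eXn2l // ltr1n.
  move=> j; have [M hM] := exists_pow2 (u j / al); exists M.
  by apply: ltW; move: hM; rewrite ltr_pdivrMr.
refine (le_trans (@sum_cover _ s (fun j => al < u j) (fun k j => (2 ^+ k * al < u j) && (u j <= 2 ^+ k.+1 * al)) M (fun j => w j * u j) _ _) _).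
- by move=> j; apply: mulr_ge0.
- move=> j js ujal; right; apply: shell_up => //; exact: HM.
apply: (@le_trans _ _ (\sum_(k < M) (2 * rho `^ t * al `^ (1 - t)) * q ^+ k)).
  apply: ler_sum => k _.
  set be := 2 ^+ k * al.
  have be0 : 0 < be by rewrite /be mulr_gt0 // exprn_gt0.
  apply: (@le_trans _ _ (\sum_(j <- s | (2 ^+ k * al < u j) && (u j <= 2 ^+ k.+1 * al)) w j * (2 ^+ k.+1 * al))).
    by apply: ler_sum => j /andP[_ hj]; apply: ler_wpM2l.
  rewrite -big_distrl /=.
  apply: (@le_trans _ _ ((rho `^ t / be `^ t) * (2 ^+ k.+1 * al))).
    apply: ler_wpM2r; first by rewrite mulr_ge0 // ?exprn_ge0 // ltW.
    by apply: le_trans (Hw be be0); apply: sum_sub_le => // j /andP[].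
  have e1 : 2 ^+ k.+1 * al = 2 * be by rewrite /be exprS mulrA.
  have e2 : be `^ (1 - t) = be / be `^ t.
    rewrite powRB ?powRr1 ?(ltW be0) //; by rewrite (gt_eqF be0) implybT.
  have e3 : be `^ (1 - t) = q ^+ k * al `^ (1 - t).
    rewrite /be powRM ?exprn_ge0 ?(ltW al0) //; congr (_ * _).
    rewrite /q -!powR_mulrn ?powR_ge0 // -!powRrM mulrC //.
  have : rho `^ t / be `^ t * (2 ^+ k.+1 * al) = 2 * rho `^ t * be `^ (1 - t).
    by rewrite e2 e1; field; rewrite gt_eqF // powR_gt0.
  by move=> ->; rewrite e3 le_eqVlt; apply/orP; left; apply/eqP; ring.
rewrite -big_distrr /=.
apply: (@le_trans _ _ ((2 * rho `^ t * al `^ (1 - t)) * (1 - q)^-1)).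
  apply: ler_wpM2l; last exact: geom_le.
  by rewrite !mulr_ge0 // powR_ge0.
by rewrite le_eqVlt; apply/orP; left; apply/eqP; ring.
Qed.

End RealPart.

Section EPart.
Context {R : realType} {I : countType}.
Local Open Scope classical_set_scope.

Lemma wnorm1 (r z : I -> R) : (forall j, 0 <= r j) ->
  wnorm r 1 z = \esum_(j in [set: I]) (r j * `|z j|)%:E.
Proof.
move=> r0; rewrite /wnorm invr1 poweRe1; last by apply: esum_ge0 => j _; rewrite lee_fin powR_ge0.
by apply: eq_esum => j _; rewrite powRr1 // mulr_ge0.
Qed.

Lemma wnorm2sq (a z : I -> R) : (forall j, 0 <= a j) ->
  ((wnorm a 2 z) `^ 2 = \esum_(j in [set: I]) ((a j * `|z j|) ^+ 2)%:E)%E.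
Proof.
move=> a0; rewrite /wnorm -poweRrM mulVf ?pnatr_eq0 // poweRe1; last first.
  by apply: esum_ge0 => j _; rewrite lee_fin powR_ge0.
by apply: eq_esum => j _; rewrite powR_mulrn // mulr_ge0.
Qed.

Lemma cond_eq (a r x be : R) : 0 < a -> 0 < r ->
  (a ^-2 * r * be < `|x|) = (be < `|x| * a ^+ 2 / r).
Proof.
move=> a0 r0.
have -> : a ^-2 * r * be = (r * be) / a ^+ 2 by rewrite -mulrA mulrC.
by rewrite ltr_pdivrMr ?exprn_gt0 // ltr_pdivlMr // [be * r]mulrC.
Qed.

Lemma knorm_weak (a r : I -> R) (t rho : R) (x : I -> R) :
  (forall j, 0 < a j) -> (forall j, 0 < r j) -> 0 < t ->
  (knorm a r t x <= rho%:E)%E ->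
  forall (X : set I), finite_set X -> forall be, 0 < be ->
  \sum_(j <- finmap.enum_fset (fset_set X) | be < `|x j| * a j ^+ 2 / r j) (a j ^-2 * r j ^+ 2)
    <= rho `^ t / be `^ t.
Proof.
move=> a0 r0 t0 Hk X finX be be0.
set S := [set j | a j ^-2 * r j * be < `|x j|].
have Hk' : (be%:E * (\esum_(j in S) (a j ^-2 * r j ^+ 2)%:E) `^ t^-1 <= rho%:E)%E.
  apply: le_trans Hk; apply: ereal_sup_ubound; exists be => //.
have Hs : ((\sum_(j <- finmap.enum_fset (fset_set X) | be < `|x j| * a j ^+ 2 / r j) (a j ^-2 * r j ^+ 2))%:E
    <= \esum_(j in S) (a j ^-2 * r j ^+ 2)%:E)%E.
  rewrite esum_mkcond -sumEFin big_mkcond /= -fsbig_finite //=; apply: esum_ge.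
  exists X => //; apply: lee_fsum => // j _.
  have hS : (j \in S) = (a j ^-2 * r j * be < `|x j|) by apply/idP/idP => [/set_mem //|h]; apply/mem_set.
  by rewrite hS cond_eq //; case: ifP.
move: Hk' Hs; set m := esum _ _.
have m0 : (0 <= m)%E by apply: esum_ge0 => j _; rewrite lee_fin mulr_ge0 // ?invr_ge0 ?exprn_ge0 // ltW.
case: m m0 => [m'| |] //= m0; last first.
  by rewrite invr_eq0 (gt_eqF t0) /= muleC gt0_mulye ?lte_fin // leye_eq.
rewrite ?poweR_EFin -EFinM !lee_fin => Hk' Hs.
apply: (le_trans Hs).
have bt0 : 0 < be `^ t by apply: powR_gt0.
rewrite ler_pdivlMr // mulrC.
have -> : be `^ t * m' = (be * m' `^ t^-1) `^ t.
  by rewrite powRM ?powR_ge0 ?(ltW be0) // -powRrM mulVf ?gt_eqF // powRr1.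
by apply: ge0_ler_powR; rewrite ?nnegrE ?mulr_ge0 ?powR_ge0 ?(ltW be0) ?(le_trans _ Hk') ?mulr_ge0 ?powR_ge0 ?(ltW t0) // ltW.
Qed.


Definition Ka (t : R) := 4 * (2^-1 `^ (2 - t) / (1 - 2^-1 `^ (2 - t))).
Definition Kb (t : R) := 2 * (1 - 2 `^ (1 - t))^-1.

Lemma K1 (a r x : I -> R) (t rho al : R) :
  (forall j, 0 < a j) -> (forall j, 0 < r j) -> 1 < t -> t < 2 -> 0 < al ->
  (knorm a r t x <= rho%:E)%E ->
  (\esum_(j in [set: I]) ((a j * `|(x \- Thr a r al x)%R j|) ^+ 2)%:E
     <= (Ka t * (rho `^ t * al `^ (2 - t)))%:E)%E.
Proof.
move=> a0 r0 t1 t2 al0 Hk.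
rewrite /esum; apply: ge_ereal_sup => _ [X [finX _] <-].
rewrite fsbig_finite //= sumEFin lee_fin.
rewrite (eq_bigr (fun j => if `|x j| * a j ^+ 2 / r j <= al then
   (a j ^-2 * r j ^+ 2) * (`|x j| * a j ^+ 2 / r j) ^+ 2 else 0)); last first.
  move=> j _; rewrite /Thr cond_eq // leNgt; case: ifP => h /=.
    by rewrite subrr normr0 mulr0 expr0n.
  rewrite subr0; field.
  by rewrite !gt_eqF.
rewrite -big_mkcond /=.
have u0 : forall j, 0 <= `|x j| * a j ^+ 2 / r j.
  by move=> j; rewrite !mulr_ge0 ?invr_ge0 ?exprn_ge0 // ltW.
have w0 : forall j, 0 <= a j ^-2 * r j ^+ 2.
  by move=> j; rewrite !mulr_ge0 ?invr_ge0 ?exprn_ge0 // ltW.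
apply: weak_a => //.
move=> be be0; apply: knorm_weak => //; exact: lt_trans t1.
Qed.

Lemma K2 (a r x : I -> R) (t rho al : R) :
  (forall j, 0 < a j) -> (forall j, 0 < r j) -> 1 < t -> t < 2 -> 0 < al ->
  (knorm a r t x <= rho%:E)%E ->
  (\esum_(j in [set: I]) (r j * `|Thr a r al x j|)%:E
     <= (Kb t * (rho `^ t * al `^ (1 - t)))%:E)%E.
Proof.
move=> a0 r0 t1 t2 al0 Hk.
rewrite /esum; apply: ge_ereal_sup => _ [X [finX _] <-].
rewrite fsbig_finite //= sumEFin lee_fin.
rewrite (eq_bigr (fun j => if al < `|x j| * a j ^+ 2 / r j then
   (a j ^-2 * r j ^+ 2) * (`|x j| * a j ^+ 2 / r j) else 0)); last first.
  move=> j _; rewrite /Thr cond_eq //; case: ifP => h /=.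
    by field; rewrite !gt_eqF.
  by rewrite normr0 mulr0.
rewrite -big_mkcond /=.
have u0 : forall j, 0 <= `|x j| * a j ^+ 2 / r j.
  by move=> j; rewrite !mulr_ge0 ?invr_ge0 ?exprn_ge0 // ltW.
have w0 : forall j, 0 <= a j ^-2 * r j ^+ 2.
  by move=> j; rewrite !mulr_ge0 ?invr_ge0 ?exprn_ge0 // ltW.
apply: weak_b => //.
move=> be be0; apply: knorm_weak => //; exact: lt_trans t1.
Qed.

End EPart.

Theorem lemma5p2 (R : realType) (t L : R) :
  1 < t < 2 -> 0 < L ->
  exists Ct Ca Cr : R,
  forall (I : countType) (Y : completeNormedModType R)
         (a r : I -> R) (D : set (I -> R)) (F : (I -> R) -> Y),
  assumption_A1 a r D F L -> assumption_A2 a D ->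
  forall (delta rho : R) (xp : I -> R) (gobs : Y),
  0 <= delta -> 0 < rho -> D xp -> (knorm a r t xp <= rho%:E)%E ->
  `|gobs - F xp| <= delta ->
  forall (al : R) (xh : I -> R), 0 < al -> is_argmin D r F gobs al xh ->
  [/\ (tik r F gobs al xh <= (delta ^+ 2 + Ct * rho `^ t * al `^ (2 - t))%:E)%E,
      ((wnorm a 2 (Thr a r al xp \- xh)%R) `^ 2
         <= (8 * L ^+ 2 * delta ^+ 2 + Ca * rho `^ t * al `^ (2 - t))%:E)%E &
      (wnorm r 1 (Thr a r al xp \- xh)%R
         <= (delta ^+ 2 / al + Cr * rho `^ t * al `^ (1 - t))%:E)%E].
Proof.
move=> /andP[t1 t2] L0.
exists (L ^+ 2 * Ka t + Kb t), (4 * L ^+ 2 * (L ^+ 2 * Ka t + (L ^+ 2 * Ka t + Kb t))),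
  (Kb t + (L ^+ 2 * Ka t + Kb t)).
move=> I Y a r D F [[a0 r0] _ [DL _] _ [_ Lip]] A2 delta rho xp gobs d0 rho0 Dxp Hk Hg
  al xh al0 [Dxh Hmin].
have P12 : rho `^ t * al `^ (2 - t) = al * (rho `^ t * al `^ (1 - t)).
  rewrite mulrCA; congr (_ * _).
  have -> : 2 - t = 1 + (1 - t) by ring.
  rewrite powRD; last by rewrite (gt_eqF al0) implybT.
  by rewrite powRr1 // ltW.
rewrite -[_ * rho `^ t * al `^ (2 - t)]mulrA -[_ * rho `^ t * al `^ (2 - t)]mulrA.
rewrite -[_ * rho `^ t * al `^ (1 - t)]mulrA.
set Ct := L ^+ 2 * Ka t + Kb t.
set P1 := rho `^ t * al `^ (1 - t).
set P2 := rho `^ t * al `^ (2 - t).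
have a0' : forall j, 0 <= a j by move=> j; apply: ltW.
have r0' : forall j, 0 <= r j by move=> j; apply: ltW.
have KA := K1 a r xp t rho al a0 r0 t1 t2 al0 Hk.
have KB := K2 a r xp t rho al a0 r0 t1 t2 al0 Hk.
set T := Thr a r al xp.
have Ale : forall j, `|T j| <= `|xp j|.
  by move=> j; rewrite /T /Thr; case: ifP => _ //; rewrite normr0.
have inT : in_lp a 2 T.
  have := DL _ Dxp; rewrite /in_lp /wnorm => h.
  apply: poweR_lty; apply: le_lt_trans (lty_poweRy _ h); last by rewrite invr_eq0 pnatr_eq0.
  apply: le_esum => j _; rewrite lee_fin; apply: ge0_ler_powR; rewrite ?nnegrE ?mulr_ge0 //.
  exact: ler_wpM2l.
have DT : D T := A2 _ _ Dxp inT Ale.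
have [e [e0 [eE e2]]] : exists e, 0 <= e /\ wnorm a 2 (xp \- T)%R = e%:E /\ e ^+ 2 <= Ka t * P2.
  rewrite -wnorm2sq // in KA.
  have N0 : (0 <= wnorm a 2 (xp \- T)%R)%E by apply: poweR_ge0.
  move: KA N0; case: (wnorm a 2 _) => [e| |] // K e0.
    exists e; split; first by rewrite -lee_fin.
    by split => //; rewrite -powR_mulrn -?lee_fin -?poweR_EFin // -lee_fin.
  by move: K; rewrite poweRyr ?pnatr_eq0 // leye_eq.
have GT : `|gobs - F T| <= delta + L * e.
  have [_ U] := Lip xp T Dxp DT; rewrite eE -EFinM lee_fin in U.
  by apply: le_trans (ler_distD (F xp) _ _) _; apply: lerD.
rewrite -wnorm1 // in KB.
have tikT : (tik r F gobs al T <= (delta ^+ 2 + Ct * P2)%:E)%E.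
  rewrite /tik.
  have KT' : (al%:E * wnorm r 1 T <= (al * (Kb t * P1))%:E)%E.
    by rewrite EFinM; apply: lee_wpmul2l => //; rewrite lee_fin ltW.
  apply: le_trans (leeD (lexx _) KT') _; rewrite -EFinD lee_fin.
  have -> : al * (Kb t * P1) = Kb t * P2 by rewrite /P2 P12 -/P1; ring.
  have h1 : `|gobs - F T| ^+ 2 <= (delta + L * e) ^+ 2.
    by apply: lerXn2r; rewrite ?nnegrE // addr_ge0 // mulr_ge0 // ltW.
  have h3 : L ^+ 2 * e ^+ 2 <= L ^+ 2 * (Ka t * P2) by apply: ler_wpM2l; rewrite ?sqr_ge0.
  have h2 : (delta + L * e) ^+ 2 <= 2 * delta ^+ 2 + 2 * (L ^+ 2 * e ^+ 2).
    have := sqr_ge0 (delta - L * e); nra.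
  rewrite /Ct; lra.
have H1 := le_trans (Hmin T DT) tikT.
have Wr0 : (0 <= wnorm r 1 xh)%E by apply: poweR_ge0.
have Hh : 2^-1 * `|gobs - F xh| ^+ 2 <= delta ^+ 2 + Ct * P2.
  rewrite -lee_fin; apply: le_trans H1; rewrite /tik; apply: leeDl.
  by apply: mule_ge0 => //; rewrite lee_fin ltW.
have Hw : (wnorm r 1 xh <= ((delta ^+ 2 + Ct * P2) / al)%:E)%E.
  rewrite mulrC EFinM lee_pdivlMl //; apply: le_trans H1; rewrite /tik addeC; apply: leeDl.
  by rewrite lee_fin mulr_ge0 // ?invr_ge0 ?sqr_ge0.
split.
- exact: H1.
- set W := wnorm a 2 (T \- xh)%R.
  have [Llow _] := Lip T xh DT Dxh.
  have W0 : (0 <= W)%E by apply: poweR_ge0.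
  move: Llow W0; rewrite -/W; case: W => [w| |] // Llow W0.
    rewrite lee_fin in W0; rewrite -EFinM lee_fin in Llow.
    rewrite poweR_EFin lee_fin powR_mulrn //.
    have D1 : w <= L * `|F T - F xh|.
      have Li : 0 < L^-1 by rewrite invr_gt0.
      by rewrite -(ler_pM2l Li) mulrA mulVf ?gt_eqF // mul1r.
    have D2 : `|F T - F xh| <= `|gobs - F T| + `|gobs - F xh|.
      by rewrite (distrC gobs (F T)) ler_distD.
    have s1 : w ^+ 2 <= L ^+ 2 * (`|gobs - F T| + `|gobs - F xh|) ^+ 2.
      rewrite -exprMn; apply: lerXn2r; rewrite ?nnegrE ?mulr_ge0 ?addr_ge0 ?(ltW L0) //.
      by apply: (le_trans D1); apply: ler_wpM2l => //; apply: ltW.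
    have s2 : (`|gobs - F T| + `|gobs - F xh|) ^+ 2 <= 2 * `|gobs - F T| ^+ 2 + 2 * `|gobs - F xh| ^+ 2.
      by have := sqr_ge0 (`|gobs - F T| - `|gobs - F xh|); nra.
    have s3 : `|gobs - F T| ^+ 2 <= 2 * delta ^+ 2 + 2 * (L ^+ 2 * e ^+ 2).
      have : `|gobs - F T| ^+ 2 <= (delta + L * e) ^+ 2.
        by apply: lerXn2r; rewrite ?nnegrE // addr_ge0 // mulr_ge0 // ltW.
      by have := sqr_ge0 (delta - L * e); nra.
    have s5 : L ^+ 2 * e ^+ 2 <= L ^+ 2 * (Ka t * P2) by apply: ler_wpM2l; rewrite ?sqr_ge0.
    have s4 : 2 * `|gobs - F T| ^+ 2 + 2 * `|gobs - F xh| ^+ 2 <=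
       8 * delta ^+ 2 + 4 * (L ^+ 2 * (Ka t * P2)) + 4 * (Ct * P2) by lra.
    apply: (le_trans s1); apply: (le_trans (ler_wpM2l (sqr_ge0 L) (le_trans s2 s4))).
    by rewrite le_eqVlt; apply/orP; left; apply/eqP; rewrite /Ct; ring.
  move: Llow; rewrite muleC gt0_mulye ?lte_fin ?invr_gt0 // leye_eq.
- rewrite wnorm1 //.
  apply: (@le_trans _ _ (\esum_(j in [set: I]) (((r j * `|T j|)%R)%:E + ((r j * `|xh j|)%R)%:E)%E)).
    apply: le_esum => j _; rewrite -EFinD lee_fin -mulrDr ler_wpM2l //.
    exact: ler_normB.
  rewrite esumD; last 2 first.
  + by move=> j _; rewrite lee_fin mulr_ge0.
  + by move=> j _; rewrite lee_fin mulr_ge0.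
  rewrite wnorm1 // in Hw.
  rewrite wnorm1 // in KB.
  apply: (le_trans (leeD KB Hw)); rewrite -EFinD lee_fin.
  rewrite /P2 P12 -/P1.
  by rewrite le_eqVlt; apply/orP; left; apply/eqP; rewrite /Ct; field; rewrite gt_eqF.
Qed.
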